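(* Let $q\in\mathbb{C}$, $|q|<1$, $\mathbf{s}=(s_1,\dots,s_d)\in\mathbb{N}^d$ and $\mathbf{a}=(a_1,\dots,a_d)\in\mathbb{Z}_{\ge0}^d$ with $a_j\le s_j$ for all $j$, and put $w=s_1+\dots+s_d$. Let $$G(t)=\mathbf{R}^{s_1-a_1}\Big[\mathbf{P}^{a_1}\big[\mathbf{y}\,\mathbf{R}^{s_2-a_2}[\mathbf{P}^{a_2}[\mathbf{y}\cdots\mathbf{R}^{s_d-a_d}[\mathbf{P}^{a_d}[\mathbf{y}]]\cdots]]\big]\Big](t).$$ If $s_1+\dots+s_j>a_1+\dots+a_j$ for all $j=1,\dots,d$, then $\zeta_q^{\mathbf{s}-\mathbf{a}}[\mathbf{s}]=(1-q)^wG(1)$ and $\mathfrak{z}_q^{\mathbf{s}-\mathbf{a}}[\mathbf{s}]=G(1)$, where $\mathbf{s}-\mathbf{a}=(s_1-a_1,\dots,s_d-a_d)$.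
   Context: $\mathfrak{z}_q^{\mathbf{t}}[\mathbf{s}]=\sum_{k_1>\dots>k_d>0}\prod_{j}\frac{q^{k_jt_j}}{(1-q^{k_j})^{s_j}}$ and $\zeta_q^{\mathbf{t}}[\mathbf{s}]=(1-q)^{|\mathbf{s}|}\mathfrak{z}_q^{\mathbf{t}}[\mathbf{s}]$. Operators on power series $f(t)$ without constant term in $t$: $\mathbf{P}[f](t)=\sum_{k\ge0}f(q^kt)$, $\mathbf{R}[f](t)=\sum_{k\ge1}f(q^kt)$, with $n$-fold compositions $\mathbf{P}^n,\mathbf{R}^n$; $\mathbf{y}$ denotes multiplication by $\mathbf{y}(t)=\frac{t}{1-t}$ (the innermost $\mathbf{y}$ being the function itself). $G(1)$ is the value at $t=1$. *)

(* Defs.v *)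
From Stdlib Require Import Reals List Arith.
From Coquelicot Require Import Coquelicot.
Import ListNotations.
Open Scope C_scope.

(* Value of an infinite series of complex numbers sum_{n>=0} a n,
   taken componentwise via Coquelicot's Series (the limit of partial sums
   when it exists). *)
Definition Csum (a : nat -> C) : C :=
  (Series (fun n => Re (a n)), Series (fun n => Im (a n))).

Fixpoint fsum (n : nat) (f : nat -> C) : C :=
  match n with
  | O => 0
  | S m => fsum m f + f m
  end.

Fixpoint opiter (n : nat) (O : (C -> C) -> (C -> C)) (f : C -> C) : C -> C :=
  match n with
  | O => f
  | S m => O (opiter m O f)
  end.

Definition opP (q : C) (f : C -> C) : C -> C :=
  fun t => Csum (fun k => f (q ^ k * t)).

Definition opR (q : C) (f : C -> C) : C -> C :=
  fun t => Csum (fun k => f (q ^ (S k) * t)).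

Definition yfun (t : C) : C := t / (1 - t).

(* For a list of pairs [(s_1,a_1);...;(s_d,a_d)]:
   Gfun [] = 1 (so that the innermost  y * Gfun [] = y), and
   Gfun ((s,a)::rest) = R^(s-a) [ P^a [ y * Gfun rest ] ]. *)
Fixpoint Gfun (q : C) (sa : list (nat * nat)) : C -> C :=
  match sa with
  | [] => fun _ => 1
  | (s, a) :: rest =>
      opiter (s - a) (opR q) (opiter a (opP q) (fun t => yfun t * Gfun q rest t))
  end.

Definition zterm (q : C) (k t s : nat) : C := q ^ (k * t) / (1 - q ^ k) ^ s.

(* finite part: sum over m > k_1 > ... > k_r > 0 of prod_j zterm k_j t_j s_j,
   for ts = [(t_1,s_1);...;(t_r,s_r)] *)
Fixpoint zfin (q : C) (m : nat) (ts : list (nat * nat)) : C :=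
  match ts with
  | [] => 1
  | (t, s) :: rest =>
      fsum (Nat.pred m) (fun i => zterm q (S i) t s * zfin q (S i) rest)
  end.

(* frak z_q^t[s] = sum_{k_1 > ... > k_d > 0} prod_j q^(k_j t_j)/(1-q^(k_j))^(s_j),
   summed as a series in k_1 (the inner sums being finite). *)
Definition zfrak_pairs (q : C) (ts : list (nat * nat)) : C :=
  match ts with
  | [] => 1
  | (t, s) :: rest => Csum (fun n => zterm q (S n) t s * zfin q (S n) rest)
  end.

Definition zfrak (q : C) (t s : list nat) : C := zfrak_pairs q (combine t s).

Definition sumnat (l : list nat) : nat := fold_right Nat.add 0%nat l.

Definition zetaq (q : C) (t s : list nat) : C := (1 - q) ^ (sumnat s) * zfrak q t s.

Definition subl (s a : list nat) : list nat := map (fun p => (fst p - snd p)%nat) (combine s a).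

(* Main.v *)
Require Import Defs.
From Stdlib Require Import Reals List Arith Lia Lra.
From Coquelicot Require Import Coquelicot.
Import ListNotations.
Open Scope C_scope.

Definition CS (a : nat -> C) (l : C) := @is_series C_AbsRing C_NormedModule a l.

Lemma fsum_sum_n (a : nat -> C) N : @sum_n C_AbelianMonoid a N = fsum (S N) a.
Proof.
  induction N.
  - rewrite sum_O. simpl. unfold plus; simpl. ring.
  - unfold sum_n in *. rewrite sum_n_Sm; [|lia]. rewrite IHN. simpl. reflexivity.
Qed.

Lemma Csum_correct a l : CS a l -> Csum a = l.
Proof.
  intro H. unfold Csum.
  assert (HR : forall f : C -> R, (f = fst \/ f = snd) ->
    is_series (fun n => f (a n)) (f l)).
  { intros f Hf. unfold is_series.
    assert (Hs : forall N, sum_n (fun n => f (a n)) N = f (@sum_n C_AbelianMonoid a N)).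
    { induction N.
      - rewrite !sum_O. reflexivity.
      - unfold sum_n in *. rewrite !sum_n_Sm; try lia. rewrite IHN.
        destruct Hf; subst; reflexivity. }
    apply (filterlim_locally (F:=eventually)). intro eps.
    unfold CS, is_series in H.
    pose proof (proj1 (filterlim_locally (F:=eventually) _ _) H eps) as H'.
    destruct H' as [M HM]. exists M. intros n Hn. rewrite Hs.
    destruct (HM n Hn) as [H1 H2]. destruct Hf; subst; assumption. }
  pose proof (is_series_unique _ _ (HR fst (or_introl eq_refl))) as E1.
  pose proof (is_series_unique _ _ (HR snd (or_intror eq_refl))) as E2.
  unfold Re, Im. rewrite E1, E2. destruct l; reflexivity.
Qed.

Lemma CS_unique a l1 l2 : CS a l1 -> CS a l2 -> l1 = l2.
Proof.
  intros H1 H2. eapply (filterlim_locally_unique (F:=eventually)); eauto.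
Qed.

Lemma CS_ext a b l : (forall n, a n = b n) -> CS a l -> CS b l.
Proof. intros; eapply is_series_ext; eauto. Qed.

Lemma CS_plus a b la lb : CS a la -> CS b lb -> CS (fun n => a n + b n) (la + lb).
Proof. intros H1 H2. exact (is_series_plus _ _ _ _ H1 H2). Qed.

Lemma CS_scal c a l : CS a l -> CS (fun n => c * a n) (c * l).
Proof. intros H. exact (is_series_scal c _ _ H). Qed.

Lemma CS_minus a b la lb : CS a la -> CS b lb -> CS (fun n => a n - b n) (la - lb).
Proof.
  intros H1 H2. apply CS_plus; auto.
  apply CS_ext with (fun n => (-1) * b n). intro; ring.
  replace (- lb) with ((-1) * lb) by ring. apply CS_scal; auto.
Qed.

Lemma CS_abs a : ex_series (fun n => Cmod (a n)) -> exists l, CS a l.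
Proof.
  intro H.
  assert (E : @ex_series C_AbsRing C_CompleteNormedModule a).
  { apply (ex_series_le (V:=C_CompleteNormedModule) a (fun n => Cmod (a n))); auto.
    intro n. apply Rle_refl. }
  destruct E as [l Hl]. exists l. exact Hl.
Qed.

Lemma CS_of_bound a l (e : nat -> R) :
  (forall N, (Cmod (fsum (S N) a - l) <= e N)%R) -> is_lim_seq e 0%R -> CS a l.
Proof.
  intros Hb He. unfold CS, is_series.
  apply (filterlim_locally (F:=eventually)). intro eps.
  pose proof (proj1 (filterlim_locally (F:=eventually) _ _) He eps) as H'.
  destruct H' as [M HM]. exists M. intros n Hn.
  apply norm_compat1. specialize (HM n Hn).
  change (ball 0%R eps (e n)) with (Rabs (e n - 0) < eps)%R in HM.
  change (Cmod (@sum_n C_AbelianMonoid a n - l) < eps)%R.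
  rewrite fsum_sum_n. eapply Rle_lt_trans; [apply Hb|].
  eapply Rle_lt_trans; [|apply HM]. rewrite Rminus_0_r. apply Rle_abs.
Qed.

Lemma sum_le_Series (a : nat -> R) N :
  (forall n, 0 <= a n)%R -> ex_series a -> (sum_n a N <= Series a)%R.
Proof.
  intros Hp He. apply Series_correct in He.
  unfold is_series in He.
  assert (Hl : is_lim_seq (sum_n a) (Series a)) by exact He.
  apply (is_lim_seq_incr_n _ N) in Hl.
  assert (Hm : forall k, (sum_n a N <= sum_n a (k + N))%R).
  { induction k. simpl; lra.
    simpl. unfold sum_n in *. rewrite sum_n_Sm; [|lia].
    unfold plus; simpl. specialize (Hp (S (k+N))). lra. }
  apply (is_lim_seq_le (fun _ => sum_n a N) (fun n => sum_n a (n + N)) (sum_n a N) (Series a)); auto.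
  apply is_lim_seq_const.
Qed.

Lemma CS_norm_le a l (b : nat -> R) lb :
  CS a l -> (forall n, Cmod (a n) <= b n)%R -> is_series b lb -> (Cmod l <= lb)%R.
Proof.
  intros Ha Hab Hb.
  assert (Hp : forall N, (Cmod (fsum (S N) a) <= sum_n b N)%R).
  { induction N.
    - simpl. rewrite sum_O. rewrite Cplus_0_l. apply Hab.
    - unfold sum_n in *. rewrite sum_n_Sm; [|lia].
      change (fsum (S (S N)) a) with (fsum (S N) a + a (S N)).
      unfold plus; simpl.
      eapply Rle_trans. apply Cmod_triangle. specialize (Hab (S N)). simpl fsum in *. lra. }
  assert (H1 : is_lim_seq (fun N => Cmod (@sum_n C_AbelianMonoid a N)) (Cmod l)).
  { unfold is_lim_seq.
    eapply filterlim_comp. exact Ha.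
    assert (Hf := filterlim_norm (K:=C_AbsRing) (V:=C_NormedModule) l).
    intros P HP. apply Hf. exact HP. }
  assert (H2 : is_lim_seq (sum_n b) lb) by exact Hb.
  apply (is_lim_seq_le (fun N => Cmod (@sum_n C_AbelianMonoid a N)) (sum_n b) (Cmod l) lb); auto.
  intro N. rewrite fsum_sum_n. apply Hp.
Qed.

Lemma pow_le_one (x : R) n : (0 <= x <= 1)%R -> (x ^ n <= 1)%R.
Proof. intros H. rewrite <- (pow1 n). apply pow_incr. lra. Qed.

Lemma pow_le_self (x : R) n : (0 <= x <= 1)%R -> (1 <= n)%nat -> (x ^ n <= x)%R.
Proof.
  intros H Hn. destruct n. lia. simpl.
  pose proof (pow_le_one x n H). nra.
Qed.

Lemma Cpow_comm (q : C) n N : (q ^ N) ^ n = (q ^ n) ^ N.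
Proof. rewrite <- !Cpow_mult_r. rewrite Nat.mul_comm. reflexivity. Qed.

Lemma one_minus_nz (z : C) : (Cmod z < 1)%R -> 1 - z <> 0.
Proof.
  intros H E. assert (z = 1). { replace z with (z + RtoC 0) by ring. rewrite <- E. ring. }
  subst. rewrite Cmod_1 in H. lra.
Qed.

Lemma Cmod_one_minus (z : C) : (1 - Cmod z <= Cmod (1 - z))%R.
Proof.
  pose proof (Cmod_triangle (1 - z) z) as H.
  replace (1 - z + z) with (RtoC 1) in H by ring. rewrite Cmod_1 in H. lra.
Qed.

Lemma inv_bound (q : C) n : (Cmod q < 1)%R -> (1 <= n)%nat ->
  1 - q ^ n <> 0 /\ (Cmod (/ (1 - q ^ n)) <= / (1 - Cmod q))%R.
Proof.
  intros Hq Hn.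
  assert (Hqn : (Cmod (q ^ n) <= Cmod q)%R).
  { rewrite Cmod_pow. apply pow_le_self; auto. split; [apply Cmod_ge_0|lra]. }
  assert (Hz : 1 - q ^ n <> 0) by (apply one_minus_nz; lra).
  split; auto. rewrite Cmod_inv; auto. apply Rinv_le_contravar. lra.
  pose proof (Cmod_one_minus (q ^ n)). lra.
Qed.

Lemma coef_bound (q : C) (b : nat -> C) n : (Cmod q < 1)%R -> b 0%nat = 0 ->
  (Cmod (b n * / (1 - q ^ n)) <= / (1 - Cmod q) * Cmod (b n))%R.
Proof.
  intros Hq H0. destruct n.
  - rewrite H0, Cmult_0_l, Cmod_0. lra.
  - destruct (inv_bound q (S n) Hq) as [_ Hb]; [lia|].
    rewrite Cmod_mult. rewrite Rmult_comm. apply Rmult_le_compat_r; auto.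
    apply Cmod_ge_0.
Qed.

Lemma geom_fsum (x : C) M : fsum M (fun k => x ^ k) * (1 - x) = 1 - x ^ M.
Proof.
  induction M; simpl. ring.
  transitivity (fsum M (fun k => x ^ k) * (1 - x) + x ^ M * (1 - x)). ring.
  rewrite IHM. ring.
Qed.

Lemma Csum_ext a a' : (forall n, a n = a' n) -> Csum a = Csum a'.
Proof.
  intros H. unfold Csum. rewrite (Series_ext _ (fun n => Re (a' n))).
  rewrite (Series_ext (fun n => Im (a n)) (fun n => Im (a' n))). reflexivity.
  intros; rewrite H; auto. intros; rewrite H; auto.
Qed.

Lemma CS_zero (a : nat -> C) : CS (fun n => a n * 0) 0.
Proof.
  apply CS_of_bound with (e := fun _ => 0%R).
  - intros N. assert (E : fsum (S N) (fun n => a n * 0) = 0).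
    { generalize (S N). induction n; simpl; auto. rewrite IHn. ring. }
    rewrite E. replace (RtoC 0 - RtoC 0) with (RtoC 0) by ring. rewrite Cmod_0. lra.
  - apply is_lim_seq_const.
Qed.

Definition Rep (f : C -> C) (b : nat -> C) :=
 (forall t, (Cmod t < 1)%R -> CS (fun n => b n * t ^ n) (f t)) /\
 (forall r, (0 <= r < 1)%R -> ex_series (fun n => Cmod (b n) * r ^ n)%R).

Lemma Rep_ext f b b' : (forall n, b n = b' n) -> Rep f b -> Rep f b'.
Proof.
  intros E [H1 H2]. split.
  - intros t Ht. eapply CS_ext; [|apply H1; auto]. intro n; simpl. rewrite E; auto.
  - intros r Hr. eapply ex_series_ext; [|apply H2; auto]. intro n; simpl. rewrite E; auto. auto.
Qed.

Definition delta (n : nat) : C := match n with O => 1 | S _ => 0 end.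

Lemma Rep_one : Rep (fun _ => 1) delta.
Proof.
  split.
  - intros t Ht. apply CS_of_bound with (e := fun _ => 0%R).
    + intros N. assert (E : fsum (S N) (fun n => delta n * t ^ n) = 1).
      { induction N. simpl. ring. change (fsum (S (S N)) (fun n => delta n * t ^ n))
          with (fsum (S N) (fun n => delta n * t ^ n) + delta (S N) * t ^ (S N)).
        rewrite IHN. simpl. ring. }
      rewrite E. replace (RtoC 1 - RtoC 1) with (RtoC 0) by ring. rewrite Cmod_0. lra.
    + apply is_lim_seq_const.
  - intros r Hr. apply (ex_series_le (V:=R_CompleteNormedModule) _ (fun n => r ^ n)%R).
    + intros n. change (Rabs (Cmod (delta n) * r ^ n) <= r ^ n)%R.
      assert (0 <= r ^ n)%R by (apply pow_le; lra).
      destruct n; simpl; [rewrite Cmod_1|rewrite Cmod_0]; rewrite Rabs_right; try (apply Rle_ge); simpl in *; nra.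
    + apply ex_series_geom. rewrite Rabs_right; lra.
Qed.

Fixpoint rsum (n : nat) (f : nat -> R) : R :=
  match n with O => 0%R | S m => (rsum m f + f m)%R end.

Lemma rsum_sum_n f N : rsum (S N) f = sum_n f N.
Proof.
  induction N. simpl. rewrite sum_O. lra.
  unfold sum_n in *. rewrite sum_n_Sm; [|lia]. rewrite <- IHN. simpl. reflexivity.
Qed.

Lemma Rep_y f b : Rep f b -> Rep (fun t => yfun t * f t) (fun n => fsum n b).
Proof.
  intros [H1 H2].
  assert (Hex : forall r, (0 <= r < 1)%R -> ex_series (fun n => Cmod (fsum n b) * r ^ n)%R).
  { intros r Hr. set (s := sqrt r).
    assert (Hs0 : (0 <= s)%R) by apply sqrt_pos.
    assert (Hss : (s * s = r)%R) by (apply sqrt_sqrt; lra).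
    assert (Hs1 : (s < 1)%R) by nra.
    set (S0 := Series (fun m => Cmod (b m) * s ^ m)%R).
    assert (Hg : forall n, (Cmod (fsum n b) * s ^ n <= rsum n (fun m => Cmod (b m) * s ^ m))%R).
    { induction n; simpl. rewrite Cmod_0. lra.
      pose proof (Cmod_triangle (fsum n b) (b n)).
      assert (0 <= s ^ n)%R by (apply pow_le; lra).
      assert (0 <= Cmod (fsum n b) * s ^ n)%R by (apply Rmult_le_pos; auto; apply Cmod_ge_0).
      assert (0 <= Cmod (b n))%R by apply Cmod_ge_0.
      assert (Cmod (fsum n b + b n) * (s * s ^ n) <= (Cmod (fsum n b) + Cmod (b n)) * s ^ n)%R.
      { apply Rle_trans with ((Cmod (fsum n b) + Cmod (b n)) * (s * s ^ n))%R.
        apply Rmult_le_compat_r; nra.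
        apply Rmult_le_compat_l. pose proof (Cmod_ge_0 (fsum n b)). lra. nra. }
      nra. }
    assert (HS : forall n, (rsum n (fun m => Cmod (b m) * s ^ m) <= S0)%R).
    { intro n. assert (Hpos : forall m, (0 <= Cmod (b m) * s ^ m)%R).
      { intro m. apply Rmult_le_pos. apply Cmod_ge_0. apply pow_le; lra. }
      apply Rle_trans with (rsum (S n) (fun m => Cmod (b m) * s ^ m)%R).
      simpl. specialize (Hpos n). lra.
      rewrite rsum_sum_n. apply sum_le_Series; auto. }
    apply (ex_series_le (V:=R_CompleteNormedModule) _ (fun n => S0 * s ^ n)%R).
    + intros n. change (Rabs (Cmod (fsum n b) * r ^ n) <= S0 * s ^ n)%R.
      assert (0 <= s ^ n)%R by (apply pow_le; lra).
      assert (0 <= Cmod (fsum n b))%R by apply Cmod_ge_0.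
      rewrite Rabs_right; [|apply Rle_ge, Rmult_le_pos; auto; apply pow_le; lra].
      rewrite <- Hss, Rpow_mult_distr.
      specialize (Hg n). specialize (HS n).
      assert (s ^ n <= 1)%R by (apply pow_le_one; lra).
      nra.
    + apply (ex_series_scal_l (V:=R_NormedModule) S0). apply ex_series_geom.
      rewrite Rabs_right; lra. }
  split; auto.
  intros t Ht.
  destruct (CS_abs (fun n => fsum n b * t ^ n)) as [L HL].
  { eapply ex_series_ext; [|apply (Hex (Cmod t)); split; [apply Cmod_ge_0|lra]].
    intro n. simpl. rewrite Cmod_mult, Cmod_pow. reflexivity. }
  assert (HS : CS (fun n => fsum (S n) b * t ^ (S n)) L).
  { unfold CS. apply (is_series_incr_1 (V:=C_NormedModule) (fun n => fsum n b * t ^ n)).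
    assert (E0 : @plus C_NormedModule L (fsum 0 b * t ^ 0) = L).
    { simpl. change (L + RtoC 0 * RtoC 1 = L). ring. }
    rewrite E0. exact HL. }
  assert (HT := CS_scal t _ _ HL).
  assert (HD := CS_minus _ _ _ _ HS HT).
  assert (HF := CS_scal t _ _ (H1 t Ht)).
  assert (E : L - t * L = t * f t).
  { eapply CS_unique; [exact HD|]. eapply CS_ext; [|exact HF].
    intro n. simpl. ring. }
  pose proof (one_minus_nz t Ht).
  replace (yfun t * f t) with L; auto.
  unfold yfun. replace (t / (1 - t) * f t) with ((t * f t) / (1 - t)) by (field; auto).
  rewrite <- E. field. auto.
Qed.

Section P.
Variable q : C.
Hypothesis Hq : (Cmod q < 1)%R.

Lemma P_pt f b : Rep f b -> b 0%nat = 0 -> forall t, (Cmod t < 1)%R ->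
  CS (fun n => b n * / (1 - q ^ n) * t ^ n) (opP q f t).
Proof.
  intros [H1 H2] H0 t Ht.
  set (K0 := (/ (1 - Cmod q))%R).
  assert (HK0 : (0 < K0)%R) by (apply Rinv_0_lt_compat; lra).
  assert (Ht0 : (0 <= Cmod t < 1)%R) by (split; [apply Cmod_ge_0|lra]).
  set (S0 := Series (fun n => Cmod (b n) * Cmod t ^ n)%R).
  assert (HS0 : is_series (fun n => Cmod (b n) * Cmod t ^ n)%R S0)
    by (apply Series_correct; apply H2; auto).
  assert (Hcb : forall n, (Cmod (b n * / (1 - q ^ n) * t ^ n) <= K0 * (Cmod (b n) * Cmod t ^ n))%R).
  { intro n. rewrite Cmod_mult, Cmod_pow. pose proof (coef_bound q b n Hq H0).
    assert (0 <= Cmod t ^ n)%R by (apply pow_le; lra). fold K0 in H. nra. }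
  destruct (CS_abs (fun n => b n * / (1 - q ^ n) * t ^ n)) as [L HL].
  { apply (ex_series_le (V:=R_CompleteNormedModule) _ (fun n => K0 * (Cmod (b n) * Cmod t ^ n))%R).
    + intro n. change (Rabs (Cmod (b n * / (1 - q ^ n) * t ^ n)) <= K0 * (Cmod (b n) * Cmod t ^ n))%R.
      rewrite Rabs_right; [apply Hcb|apply Rle_ge, Cmod_ge_0].
    + apply (ex_series_scal_l (V:=R_NormedModule) K0). apply H2; auto. }
  assert (Hpart : forall N, CS (fun n => b n * t ^ n * fsum N (fun k => (q ^ n) ^ k))
                                (fsum N (fun k => f (q ^ k * t)))).
  { induction N.
    - simpl. apply CS_zero.
    - simpl. assert (Hqt : (Cmod (q ^ N * t) < 1)%R).
      { rewrite Cmod_mult, Cmod_pow.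
        assert (Cmod q ^ N <= 1)%R by (apply pow_le_one; split; [apply Cmod_ge_0|lra]).
        assert (0 <= Cmod q ^ N)%R by (apply pow_le, Cmod_ge_0). nra. }
      eapply CS_ext; [|apply (CS_plus _ _ _ _ IHN (H1 _ Hqt))].
      intro n. simpl. rewrite Cpow_mult_l, Cpow_comm. ring. }
  set (d := fun N n => b n * t ^ n * (q ^ n) ^ (S N) * / (1 - q ^ n)).
  assert (Hrem : forall N, CS (d N) (L - fsum (S N) (fun k => f (q ^ k * t)))).
  { intro N. eapply CS_ext; [|apply (CS_minus _ _ _ _ HL (Hpart (S N)))].
    intro n. unfold d. destruct n.
    - rewrite H0. ring.
    - destruct (inv_bound q (S n) Hq) as [Hnz _]; [lia|].
      pose proof (geom_fsum (q ^ S n) (S N)) as G.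
      assert (G' : fsum (S N) (fun k => (q ^ S n) ^ k) = (1 - (q ^ S n) ^ S N) / (1 - q ^ S n)).
      { rewrite <- G. field. auto. }
      rewrite G'. field. auto. }
  assert (HP : CS (fun k => f (q ^ k * t)) L).
  { apply CS_of_bound with (e := fun N => (Cmod q ^ (S N) * (K0 * S0))%R).
  - intro N. replace (fsum (S N) (fun k => f (q ^ k * t)) - L)
      with (- (L - fsum (S N) (fun k => f (q ^ k * t)))) by ring.
    rewrite Cmod_opp.
    apply (CS_norm_le _ _ (fun n => Cmod q ^ (S N) * (K0 * (Cmod (b n) * Cmod t ^ n)))%R _ (Hrem N)).
    + intro n. unfold d. destruct n.
      * rewrite H0. rewrite !Cmult_0_l, Cmod_0. simpl. try rewrite Cmod_0. nra.
      * replace (b (S n) * t ^ S n * (q ^ S n) ^ S N * / (1 - q ^ S n))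
          with ((b (S n) * / (1 - q ^ S n) * t ^ S n) * (q ^ S n) ^ S N) by ring.
        rewrite Cmod_mult. rewrite Cmod_pow.
        specialize (Hcb (S n)).
        assert (E1 : (Cmod (q ^ S n) ^ S N <= Cmod q ^ S N)%R).
        { apply pow_incr. split. apply Cmod_ge_0. rewrite Cmod_pow.
          apply pow_le_self; [split; [apply Cmod_ge_0|lra]|lia]. }
        assert (0 <= Cmod (q ^ S n) ^ S N)%R by (apply pow_le, Cmod_ge_0).
        pose proof (Cmod_ge_0 (b (S n) * / (1 - q ^ S n) * t ^ S n)).
        assert (0 <= Cmod q ^ S N)%R by (apply pow_le, Cmod_ge_0).
        nra.
    + apply (is_series_scal_l (V:=R_NormedModule) (Cmod q ^ S N)%R).
      apply (is_series_scal_l (V:=R_NormedModule) K0). exact HS0.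
  - replace 0%R with (0 * (K0 * S0))%R by ring.
    apply (is_lim_seq_scal_r (fun N => Cmod q ^ S N)%R (K0 * S0) 0%R).
    apply (is_lim_seq_incr_1 (fun N => Cmod q ^ N)%R).
    apply is_lim_seq_geom. rewrite Rabs_right; [lra|apply Rle_ge, Cmod_ge_0]. }
  unfold opP. rewrite (Csum_correct _ _ HP). exact HL.
Qed.
End P.

Section PR.
Variable q : C.
Hypothesis Hq : (Cmod q < 1)%R.

Lemma Rep_P f b : Rep f b -> b 0%nat = 0 -> Rep (opP q f) (fun n => b n * / (1 - q ^ n)).
Proof.
  intros HR H0. split.
  - intros t Ht. apply P_pt; auto.
  - intros r Hr. destruct HR as [_ H2].
    apply (ex_series_le (V:=R_CompleteNormedModule) _
      (fun n => / (1 - Cmod q) * (Cmod (b n) * r ^ n))%R).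
    + intro n. change (Rabs (Cmod (b n * / (1 - q ^ n)) * r ^ n) <= / (1 - Cmod q) * (Cmod (b n) * r ^ n))%R.
      pose proof (coef_bound q b n Hq H0).
      assert (0 <= r ^ n)%R by (apply pow_le; lra).
      pose proof (Cmod_ge_0 (b n * / (1 - q ^ n))).
      rewrite Rabs_right; [nra|apply Rle_ge; nra].
    + apply (ex_series_scal_l (V:=R_NormedModule)). apply H2; auto.
Qed.

Lemma R_pt f b : Rep f b -> b 0%nat = 0 -> forall t, (Cmod t <= 1)%R ->
  CS (fun n => b n * (q ^ n * / (1 - q ^ n)) * t ^ n) (opR q f t).
Proof.
  intros HR H0 t Ht.
  assert (Hqt : (Cmod (q * t) < 1)%R).
  { rewrite Cmod_mult. pose proof (Cmod_ge_0 q). pose proof (Cmod_ge_0 t). nra. }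
  assert (E : opR q f t = opP q f (q * t)).
  { unfold opR, opP. apply Csum_ext. intro n. f_equal. simpl. ring. }
  rewrite E. eapply CS_ext; [|apply (P_pt q Hq f b HR H0 _ Hqt)].
  intro n. simpl. rewrite Cpow_mult_l. ring.
Qed.

Lemma Rep_R f b : Rep f b -> b 0%nat = 0 ->
  Rep (opR q f) (fun n => b n * (q ^ n * / (1 - q ^ n))).
Proof.
  intros HR H0. split.
  - intros t Ht. apply R_pt; auto. lra.
  - intros r Hr. destruct HR as [_ H2].
    apply (ex_series_le (V:=R_CompleteNormedModule) _
      (fun n => / (1 - Cmod q) * (Cmod (b n) * r ^ n))%R).
    + intro n. change (Rabs (Cmod (b n * (q ^ n * / (1 - q ^ n))) * r ^ n) <= / (1 - Cmod q) * (Cmod (b n) * r ^ n))%R.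
      pose proof (coef_bound q b n Hq H0).
      assert (Hqn : (Cmod (q ^ n) <= 1)%R).
      { rewrite Cmod_pow. apply pow_le_one. split; [apply Cmod_ge_0|lra]. }
      replace (b n * (q ^ n * / (1 - q ^ n))) with ((b n * / (1 - q ^ n)) * q ^ n) by ring.
      rewrite Cmod_mult.
      assert (0 <= r ^ n)%R by (apply pow_le; lra).
      pose proof (Cmod_ge_0 (b n * / (1 - q ^ n))).
      pose proof (Cmod_ge_0 (q ^ n)).
      assert (Cmod (b n * / (1 - q ^ n)) * Cmod (q ^ n) <= Cmod (b n * / (1 - q ^ n)))%R by nra.
      assert (Cmod (b n * / (1 - q ^ n)) * Cmod (q ^ n) * r ^ n <= / (1 - Cmod q) * Cmod (b n) * r ^ n)%R.
      { apply Rmult_le_compat_r; auto. lra. }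
      rewrite Rabs_right; [nra|apply Rle_ge; apply Rmult_le_pos; auto; apply Rmult_le_pos; auto].
    + apply (ex_series_scal_l (V:=R_NormedModule)). apply H2; auto.
Qed.

Lemma Rep_iterP a : forall f b, Rep f b -> b 0%nat = 0 ->
  Rep (opiter a (opP q) f) (fun n => b n * (/ (1 - q ^ n)) ^ a).
Proof.
  induction a; intros f b HR H0.
  - simpl. eapply Rep_ext; [|exact HR]. intro; simpl; ring.
  - simpl. eapply Rep_ext; [|apply Rep_P; [apply (IHa f b HR H0)|]].
    + intro n. simpl. ring.
    + simpl. rewrite H0. ring.
Qed.

Lemma Rep_iterR a : forall f b, Rep f b -> b 0%nat = 0 ->
  Rep (opiter a (opR q) f) (fun n => b n * (q ^ n * / (1 - q ^ n)) ^ a).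
Proof.
  induction a; intros f b HR H0.
  - simpl. eapply Rep_ext; [|exact HR]. intro; simpl; ring.
  - simpl. eapply Rep_ext; [|apply Rep_R; [apply (IHa f b HR H0)|]].
    + intro n. simpl. ring.
    + simpl. rewrite H0. ring.
Qed.
End PR.

Fixpoint coef (q : C) (L : list (nat * nat)) : nat -> C :=
  match L with
  | [] => delta
  | (s, a) :: L' => fun n => fsum n (coef q L') * (/ (1 - q ^ n)) ^ a
                              * (q ^ n * / (1 - q ^ n)) ^ (s - a)
  end.

Lemma RepG q : (Cmod q < 1)%R -> forall L, Rep (Gfun q L) (coef q L).
Proof.
  intros Hq L. induction L as [|[s a] L IH].
  - exact Rep_one.
  - simpl.
    assert (H1 := Rep_iterP q Hq a _ _ (Rep_y _ _ IH) eq_refl).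
    assert (H2 := Rep_iterR q Hq (s - a) _ _ H1 ltac:(simpl; ring)).
    eapply Rep_ext; [|exact H2]. intro n. reflexivity.
Qed.

Definition tf (p : nat * nat) : nat * nat := (fst p - snd p, fst p)%nat.

Lemma fsum_shift (f : nat -> C) m : fsum (S m) f = f 0%nat + fsum m (fun i => f (S i)).
Proof. induction m. simpl. ring. change (fsum (S (S m)) f) with (fsum (S m) f + f (S m)).
  rewrite IHm. simpl. ring. Qed.

Lemma fsum_ext (f g : nat -> C) m : (forall i, (i < m)%nat -> f i = g i) -> fsum m f = fsum m g.
Proof. induction m; intros H; simpl; auto. rewrite IHm; [rewrite H; auto|]. intros; apply H; lia. Qed.

Lemma pow_combine (x y : C) a r : x <> 0 ->
  (/ x) ^ a * (y * / x) ^ r = y ^ r / x ^ (a + r).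
Proof.
  intros Hx. rewrite Cpow_mult_l, !Cpow_inv, Cpow_add_r; auto.
  field. split; apply Cpow_nz; auto.
Qed.

Lemma coef_zterm q (Hq : (Cmod q < 1)%R) n (c : C) s a : (a <= s)%nat ->
  c * (/ (1 - q ^ S n)) ^ a * (q ^ S n * / (1 - q ^ S n)) ^ (s - a)
  = zterm q (S n) (s - a) s * c.
Proof.
  intros Has. destruct (inv_bound q (S n) Hq) as [Hx _]; [lia|].
  unfold zterm. rewrite Cpow_mult_r.
  rewrite <- Cmult_assoc, pow_combine; auto.
  replace (a + (s - a))%nat with s by lia. field. apply Cpow_nz; auto.
Qed.

Lemma fsum_coef q (Hq : (Cmod q < 1)%R) L : List.Forall (fun p : nat * nat => (snd p <= fst p)%nat) L ->
  forall n, (1 <= n)%nat -> fsum n (coef q L) = zfin q n (map tf L).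
Proof.
  induction L as [|[s a] L IH]; intros HF n Hn.
  - simpl. induction n. lia. destruct n. simpl. ring.
    change (fsum (S (S n)) delta) with (fsum (S n) delta + delta (S n)).
    rewrite IHn; [|lia]. simpl. ring.
  - inversion HF; subst. simpl in H1.
    destruct n. lia. rewrite fsum_shift. simpl (zfin q (S n) (map tf ((s, a) :: L))).
    simpl (coef q ((s, a) :: L) 0%nat). simpl (fsum 0 _).
    rewrite Cmult_0_l, !Cmult_0_l, Cplus_0_l.
    apply fsum_ext. intros i Hi.
    change (fsum (S i) (coef q L) * (/ (1 - q ^ S i)) ^ a * (q ^ S i * / (1 - q ^ S i)) ^ (s - a)
      = zterm q (S i) (s - a) s * zfin q (S i) (map tf L)).
    rewrite IH; auto; [|lia]. apply coef_zterm; auto.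
Qed.

Lemma Forall_combine (s a : list nat) : length a = length s ->
  (forall j, (j < length s)%nat -> (nth j a 0 <= nth j s 0)%nat) ->
  List.Forall (fun p : nat * nat => (snd p <= fst p)%nat) (combine s a).
Proof.
  revert a. induction s as [|x s IH]; intros [|y a] Hl Hj; simpl in *; try lia; constructor.
  - simpl. apply (Hj 0%nat). lia.
  - apply IH. lia. intros j Hjl. apply (Hj (S j)). lia.
Qed.

Lemma combine_subl (s a : list nat) : length a = length s ->
  combine (subl s a) s = map tf (combine s a).
Proof.
  unfold subl. revert a. induction s as [|x s IH]; intros [|y a] Hl; simpl in *; try lia; auto.
  f_equal. apply IH. lia.
Qed.

Theorem theorem6p3 (q : C) (s a : list nat) :
  (Cmod q < 1)%R ->
  length a = length s ->
  (forall j, (j < length s)%nat -> (1 <= nth j s 0)%nat) ->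
  (forall j, (j < length s)%nat -> (nth j a 0 <= nth j s 0)%nat) ->
  (forall j, (1 <= j <= length s)%nat ->
     (sumnat (firstn j a) < sumnat (firstn j s))%nat) ->
  zetaq q (subl s a) s = (1 - q) ^ (sumnat s) * Gfun q (combine s a) 1
  /\ zfrak q (subl s a) s = Gfun q (combine s a) 1.
Proof.
  intros Hq Hl _ Hle Hsum.
  assert (Z : zfrak q (subl s a) s = Gfun q (combine s a) 1).
  { destruct s as [|s1 s'].
    - destruct a; simpl in Hl; [|lia]. reflexivity.
    - destruct a as [|a1 a']; simpl in Hl; [lia|].
      assert (H1 := Hsum 1%nat ltac:(simpl; lia)). simpl in H1.
      assert (Hl' : length a' = length s') by lia.
      unfold zfrak. rewrite combine_subl; [|simpl; lia].
      simpl.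
      destruct (s1 - a1)%nat as [|r] eqn:Er; [lia|].
      set (L := combine s' a').
      set (h := fun t => yfun t * Gfun q L t).
      set (g := opiter r (opR q) (opiter a1 (opP q) h)).
      set (cg := fun n => fsum n (coef q L) * (/ (1 - q ^ n)) ^ a1
                           * (q ^ n * / (1 - q ^ n)) ^ r).
      assert (HR : Rep g cg).
      { assert (X1 := Rep_iterP q Hq a1 _ _ (Rep_y _ _ (RepG q Hq L)) eq_refl).
        assert (X2 := Rep_iterR q Hq r _ _ X1 ltac:(simpl; ring)).
        exact X2. }
      assert (H0 : cg 0%nat = 0) by (unfold cg; simpl; ring).
      assert (HC := R_pt q Hq g cg HR H0 1 ltac:(rewrite Cmod_1; lra)).
      assert (HC' : CS (fun n => cg (S n) * (q ^ S n * / (1 - q ^ S n)) * 1 ^ S n)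
                       (opR q g 1)).
      { unfold CS. apply (is_series_incr_1 (V:=C_NormedModule)
          (fun n => cg n * (q ^ n * / (1 - q ^ n)) * 1 ^ n)).
        assert (E0 : @plus C_NormedModule (opR q g 1) (cg 0%nat * (q ^ 0 * / (1 - q ^ 0)) * 1 ^ 0)
                     = opR q g 1).
        { rewrite H0. change (opR q g 1 + RtoC 0 * (q ^ 0 * / (1 - q ^ 0)) * 1 ^ 0 = opR q g 1).
          ring. }
        rewrite E0. exact HC. }
      change (opiter (S r) (opR q) (opiter a1 (opP q) h) 1) with (opR q g 1).
      rewrite <- (Csum_correct _ _ HC').
      apply Csum_ext. intro n.
      assert (HF : List.Forall (fun p : nat * nat => (snd p <= fst p)%nat) L).
      { apply Forall_combine; auto. intros j Hj. apply (Hle (S j)). simpl. lia. }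
      unfold cg. rewrite (fsum_coef q Hq L HF (S n)); [|lia].
      rewrite Cpow_1_l, Cmult_1_r.
      assert (Ha1 : (a1 <= s1)%nat) by lia.
      rewrite <- Er. rewrite <- (coef_zterm q Hq n _ s1 a1 Ha1). rewrite Er. simpl. ring. }
  split; auto. unfold zetaq. rewrite Z. reflexivity.
Qed.
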